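(* Let $G=(V,E)$ be a forest and $\mathcal T$ a good triangulation of $\mathcal C_G$. Let $E_1,D\subseteq E$ be disjoint and, for each $f\in D$, choose $p_f\in\{\overleftarrow e_f,\overrightarrow e_f\}$. Then there exists a unique maximal simplex $S\in\mathcal T$ with $\widetilde E(S)=E_1$, $D(S)=D$ and $p_f\in S$ for all $f\in D$.
   Context: For a finite undirected multigraph $G=(V,E)$ (loops, parallel edges and isolated nodes allowed) with $n=|V|$, $m=|E|$, work in $\mathbb{R}^V\times\mathbb{R}^E\cong\mathbb{R}^{n+m}$ with standard basis vectors $e_u$ ($u\in V$), $e_f$ ($f\in E$). Fix for each edge $f$ an ordering $(u,v)$ of its endpoints ($u=v$ for a loop) and set $\widetilde e_f=e_u+e_v-e_f$, $\overleftarrow e_f=e_u-e_v+e_f$, $\overrightarrow e_f=-e_u+e_v+e_f$ (so for a loop $\overleftarrow e_f=\overrightarrow e_f=e_f$). The cosmological polytope $\mathcal C_G$ is the convex hull of $\{e_f,\widetilde e_f,\overleftarrow e_f,\overrightarrow e_f: f\in E\}\cup\{e_u: u\in V\}$; these are exactly its lattice points, and it is an $(n+m-1)$-dimensional polytope in the hyperplane $\sum_i x_i=1$. A good triangulation of $\mathcal C_G$ is a regular triangulation (induced by a height function on the lattice points of $\mathcal C_G$) whose vertex set is the set of all lattice points of $\mathcal C_G$ and which contains the standard simplex $\mathrm{conv}\{e_u,e_f: u\in V, f\in E\}$ as a maximal cell; simplices are identified with their vertex sets. For a simplex $S\in\mathcal T$: the selected nodes are $V(S)=\{u\in V: e_u\in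 S\}$; the squiggly edges $\widetilde E(S)=\{f:\widetilde e_f\in S\}$; the selected edges $\widehat E(S)=\{f: e_f\in S\}$; for non-loop edges $f$, $f\in\overleftarrow E(S)$ iff $\overleftarrow e_f\in S$ and $f\in\overrightarrow E(S)$ iff $\overrightarrow e_f\in S$ (loops are never in $\overleftarrow E(S)\cup\overrightarrow E(S)$); the double edges are $D(S)=(\overleftarrow E(S)\cup\overrightarrow E(S))\cap\widehat E(S)$. *)

(* Defs.v *)
From HB Require Import structures.
From mathcomp Require Import all_boot all_order all_algebra.
From mathcomp Require Import boolp classical_sets reals.
Set Implicit Arguments. Unset Strict Implicit. Unset Printing Implicit Defensive.
Import Order.TTheory GRing.Theory Num.Theory.
Local Open Scope ring_scope.
Local Open Scope classical_set_scope.

(* A finite multigraph: nodes 'I_n, edges 'I_m; edge f has the fixed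
   ordered endpoint pair (src f, tgt f) (src f = tgt f for a loop). *)

(** Trails: a sequence of (edge, direction) pairs; direction true means the
    edge f is traversed from src f to tgt f.  Returns the end node if the
    sequence is a walk starting at v. *)
Fixpoint trail_end (n m : nat) (src tgt : 'I_m -> 'I_n) (v : 'I_n)
    (s : seq ('I_m * bool)) : option 'I_n :=
  match s with
  | [::] => Some v
  | (f, d) :: s' =>
      if (if d then src f else tgt f) == v
      then trail_end src tgt (if d then tgt f else src f) s'
      else None
  end.

(** A forest: a multigraph with no cycle, i.e. no closed walk of positive
    length using pairwise distinct edges (loops and parallel edges are cycles). *)
Definition is_forest (n m : nat) (src tgt : 'I_m -> 'I_n) : Prop :=
  forall (v : 'I_n) (s : seq ('I_m * bool)),
    s != [::] -> uniq (map fst s) -> trail_end src tgt v s <> Some v.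

Section Cosmo.
Variables (R : realType) (n m : nat) (src tgt : 'I_m -> 'I_n).

Definition eV (u : 'I_n) : 'rV[R]_(n + m) := delta_mx 0 (lshift m u).
Definition eE (f : 'I_m) : 'rV[R]_(n + m) := delta_mx 0 (rshift n f).
Definition eT (f : 'I_m) : 'rV[R]_(n + m) := eV (src f) + eV (tgt f) - eE f.
Definition eL (f : 'I_m) : 'rV[R]_(n + m) := eV (src f) - eV (tgt f) + eE f.
Definition eR (f : 'I_m) : 'rV[R]_(n + m) := - eV (src f) + eV (tgt f) + eE f.

Definition cosmo_pts : set 'rV[R]_(n + m) :=
  [set x | (exists u, x = eV u) \/
           (exists f, x = eE f \/ x = eT f \/ x = eL f \/ x = eR f)].

Definition std_simplex : set 'rV[R]_(n + m) :=
  [set x | (exists u, x = eV u) \/ (exists f, x = eE f)].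

Definition lin (c : 'cV[R]_(n + m)) (x : 'rV[R]_(n + m)) : R := (x *m c) 0 0.

(** Cells of the regular subdivision induced by the height function h:
    vertex sets of lower faces of the lifted configuration.  Since all points
    lie in the hyperplane sum x_i = 1, affine functionals can be taken linear. *)
Definition lower_cell (h : 'rV[R]_(n + m) -> R) (S : set 'rV[R]_(n + m)) :=
  exists c : 'cV[R]_(n + m),
    (forall p, cosmo_pts p -> lin c p <= h p) /\
    S = [set p | cosmo_pts p /\ lin c p = h p].

(** Full-dimensional (i.e. (n+m-1)-dimensional, spanning the hyperplane):
    no nonzero linear functional vanishes on S. *)
Definition full_dim (S : set 'rV[R]_(n + m)) :=
  forall c : 'cV[R]_(n + m), (forall p, S p -> lin c p = 0) -> c = 0.

Definition max_cell (h : 'rV[R]_(n + m) -> R) (S : set 'rV[R]_(n + m)) :=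
  lower_cell h S /\ full_dim S.

Definition has_card (S : set 'rV[R]_(n + m)) (k : nat) :=
  exists s : seq 'rV[R]_(n + m),
    [/\ uniq s, size s = k & S = [set x | x \in s]].

(** h induces a good triangulation of C_G: the regular subdivision is a
    triangulation (every maximal cell is an (n+m-1)-simplex, i.e. a spanning
    set with n+m points), its vertex set is all lattice points, and the
    standard simplex is a maximal cell. *)
Definition good_height (h : 'rV[R]_(n + m) -> R) : Prop :=
  [/\ (forall S, max_cell h S -> has_card S (n + m)),
      (forall p, cosmo_pts p -> exists S, max_cell h S /\ S p)
    & max_cell h std_simplex].

Definition squiggly (S : set 'rV[R]_(n + m)) (f : 'I_m) : Prop := S (eT f).
Definition double_edge (S : set 'rV[R]_(n + m)) (f : 'I_m) : Prop :=
  src f != tgt f /\ (S (eL f) \/ S (eR f)) /\ S (eE f).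

End Cosmo.

(* Main.v *)
Require Import Defs.
From HB Require Import structures.
From mathcomp Require Import all_boot all_order all_algebra.
From mathcomp Require Import boolp classical_sets reals.
From mathcomp Require Import lra.
Set Implicit Arguments. Unset Strict Implicit. Unset Printing Implicit Defensive.
Import Order.TTheory GRing.Theory Num.Theory.
Local Open Scope ring_scope.
Local Open Scope classical_set_scope.

Section Aux.
Variables (R : realType) (n m : nat) (src tgt : 'I_m -> 'I_n).

Local Notation eV := (@Defs.eV R n m).
Local Notation eE := (@Defs.eE R n m).
Local Notation eT := (@Defs.eT R n m src tgt).
Local Notation eL := (@Defs.eL R n m src tgt).
Local Notation eR := (@Defs.eR R n m src tgt).
Local Notation lin := (@lin R n m).

Lemma eV_l u w : eV u 0 (lshift m w) = (u == w)%:R.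
Proof. by rewrite /Defs.eV mxE eqxx /= eq_lshift eq_sym. Qed.
Lemma eV_r u g : eV u 0 (rshift n g) = 0.
Proof. by rewrite /Defs.eV mxE eqxx /= eq_rlshift. Qed.
Lemma eE_l f w : eE f 0 (lshift m w) = 0.
Proof. by rewrite /Defs.eE mxE eqxx /= eq_lrshift. Qed.
Lemma eE_r f g : eE f 0 (rshift n g) = (f == g)%:R.
Proof. by rewrite /Defs.eE mxE eqxx /= eq_rshift eq_sym. Qed.

Lemma linD c x y : lin c (x + y) = lin c x + lin c y.
Proof. by rewrite /lin mulmxDl mxE. Qed.
Lemma linN c x : lin c (- x) = - lin c x.
Proof. by rewrite /lin mulNmx mxE. Qed.
Lemma linB c x y : lin c (x - y) = lin c x - lin c y.
Proof. by rewrite linD linN. Qed.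
Lemma lin_addc c1 c2 x : lin (c1 + c2) x = lin c1 x + lin c2 x.
Proof. by rewrite /lin mulmxDr mxE. Qed.
Lemma lin_subc c1 c2 x : lin (c1 - c2) x = lin c1 x - lin c2 x.
Proof. by rewrite /lin mulmxBr !mxE. Qed.
Lemma lin_delta c j : lin c (delta_mx 0 j) = c j 0.
Proof. by rewrite /lin -rowE mxE. Qed.
Lemma lin_eV c u : lin c (eV u) = c (lshift m u) 0.
Proof. by rewrite /Defs.eV /Defs.eE lin_delta. Qed.
Lemma lin_eE c f : lin c (eE f) = c (rshift n f) 0.
Proof. by rewrite /Defs.eV /Defs.eE lin_delta. Qed.
Lemma lin_eT c f : lin c (eT f) = c (lshift m (src f)) 0 + c (lshift m (tgt f)) 0 - c (rshift n f) 0.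
Proof. by rewrite /Defs.eT linB linD !lin_eV lin_eE. Qed.
Lemma lin_eL c f : lin c (eL f) = c (lshift m (src f)) 0 - c (lshift m (tgt f)) 0 + c (rshift n f) 0.
Proof. by rewrite /Defs.eL linD linB !lin_eV lin_eE. Qed.
Lemma lin_eR c f : lin c (eR f) = - c (lshift m (src f)) 0 + c (lshift m (tgt f)) 0 + c (rshift n f) 0.
Proof. by rewrite /Defs.eR !linD linN !lin_eV lin_eE. Qed.

Definition mkc (y : 'I_n -> R) (z : 'I_m -> R) : 'cV[R]_(n + m) :=
  \col_i (match split i with inl u => y u | inr f => z f end).
Lemma mkc_l y z u : mkc y z (lshift m u) 0 = y u.
Proof. by rewrite /mkc mxE (unsplitK (inl _ u)). Qed.
Lemma mkc_r y z f : mkc y z (rshift n f) 0 = z f.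
Proof. by rewrite /mkc mxE (unsplitK (inr _ f)). Qed.

Lemma cvec_eq0 (c : 'cV[R]_(n + m)) :
  (forall u, c (lshift m u) 0 = 0) -> (forall f, c (rshift n f) 0 = 0) -> c = 0.
Proof.
move=> Hl Hr; apply/matrixP => i j; rewrite ord1 mxE.
by rewrite -(splitK i); case: (split i) => [u|f] /=; [apply: Hl|apply: Hr].
Qed.

End Aux.

Lemma small_kernel (R : fieldType) (N : nat) (s : seq 'rV[R]_N) :
  (size s < N)%N -> exists g : 'cV[R]_N, g != 0 /\ forall x, x \in s -> x *m g = 0.
Proof.
move=> Hs.
pose A : 'M[R]_(size s, N) := \matrix_(i < size s, j < N) (nth 0 s i) 0 j.
pose K := kermx A^T.
have rK : (0 < \rank K)%N.
  rewrite mxrank_ker mxrank_tr subn_gt0.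
  exact: leq_ltn_trans (rank_leq_row A) Hs.
have [i Hi] : exists i, row i K != 0.
  apply/existsP; apply: contraTT rK => /existsPn H.
  have -> : K = 0 by apply/row_matrixP => i; rewrite row0; apply/eqP; move: (H i); rewrite negbK.
  by rewrite mxrank0.
exists (row i K)^T; split.
  by apply: contra Hi => /eqP H; rewrite -[row i K]trmxK H trmx0.
move=> x xs.
have HA : A *m (row i K)^T = 0.
  by rewrite -[A]trmxK -trmx_mul -row_mul mulmx_ker row0 trmx0.
have Hj : (index x s < size s)%N by rewrite index_mem.
have -> : x = row (Ordinal Hj) A.
  apply/rowP => j; rewrite !mxE /=.
  by rewrite nth_index.
by rewrite -row_mul HA row0.
Qed.

Section Graph.
Variables (R : realType) (n m : nat) (src tgt : 'I_m -> 'I_n).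
Local Notation te := (trail_end src tgt).

Lemma trail_cat v s1 s2 :
  te v (s1 ++ s2) = obind (fun w => te w s2) (te v s1).
Proof.
elim: s1 v => [|[f d] s1 IH] v //=.
by case: ifP.
Qed.

Lemma trail_const (T : Type) (phi : 'I_n -> T) (P : pred 'I_m) :
  (forall f, P f -> phi (src f) = phi (tgt f)) ->
  forall s x z, te x s = Some z -> all (fun e => P e.1) s ->
  phi x = phi z /\ (forall e, e \in s -> phi (src e.1) = phi x).
Proof.
move=> HP; elim=> [|[f d] s IH] x z /=.
  by case=> ->; split.
case: ifP => // /eqP Hx Ht /andP [Pf Pa].
have [E1 E2] := IH _ _ Ht Pa.
have Hw : phi (if d then tgt f else src f) = phi x.
  by rewrite -Hx; case: d {Hx Ht E1 E2} => //; rewrite HP.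
have Hs : phi (src f) = phi x.
  by rewrite -Hx; case: d {Hx Ht E1 E2 Hw} => //; rewrite HP.
split; first by rewrite -Hw.
move=> e; rewrite in_cons => /orP [/eqP -> //|es].
by rewrite E2 // Hw.
Qed.

Lemma forest_noloop : is_forest src tgt -> forall f, src f != tgt f.
Proof.
move=> Hf f; apply/negP => /eqP E.
apply: (Hf (src f) [:: (f, true)]) => //=.
by rewrite eqxx E.
Qed.

Lemma forest_acyc (D0 : {set 'I_m}) f : is_forest src tgt -> f \notin D0 ->
  forall s, te (tgt f) s = Some (src f) -> uniq (map fst s) ->
  all (fun e => e.1 \in D0) s -> False.
Proof.
move=> Hfo fD s Ht Hu Ha.
apply: (Hfo (tgt f) (rcons s (f, true))).
- by case: s {Ht Hu Ha}.
- rewrite map_rcons rcons_uniq Hu andbT; apply/mapP => -[[g d] gs /= E].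
  by move/allP: Ha => /(_ _ gs) /=; rewrite -E (negbTE fD).
- by rewrite -cats1 trail_cat Ht /= eqxx.
Qed.

Lemma uniq_join (l1 l2 : seq 'I_m) f : uniq l1 -> uniq l2 -> f \notin l1 -> f \notin l2 ->
  (forall g, g \in l1 -> g \in l2 -> False) -> uniq (l1 ++ f :: l2).
Proof.
move=> u1 u2 f1 f2 H; rewrite cat_uniq u1 /= f2 u2 !andbT.
rewrite negb_or f1 /=; apply/hasPn => g g2; apply/negP => g1.
exact: H g1 g2.
Qed.

Definition Pclaim (t : 'I_m -> R) (D0 : {set 'I_m}) :=
  exists (y : 'I_n -> R) (comp : 'I_n -> 'I_n),
   [/\ (forall x, y x <= 0),
       (forall f, f \in D0 -> y (src f) - y (tgt f) = t f),
       (forall f, f \in D0 -> comp (src f) = comp (tgt f)),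
       (forall x z, comp x = comp z -> exists s,
          [/\ te x s = Some z, uniq (map fst s) & all (fun e => e.1 \in D0) s])
     & (forall x, exists r, comp r = comp x /\ y r = 0)].

Lemma Pclaim0 t : Pclaim t finset.set0.
Proof.
exists (fun _ => 0), id; split => //.
- by move=> f; rewrite inE.
- by move=> f; rewrite inE.
- by move=> x z ->; exists [::].
- by move=> x; exists x.
Qed.


Lemma Pclaim_step t (D1 : {set 'I_m}) f : is_forest src tgt -> f \notin D1 ->
  Pclaim t D1 -> Pclaim t (f |: D1).
Proof.
move=> Hfo fD [y [comp [Hy Ht Hc Hd He]]].
have Hne : comp (src f) != comp (tgt f).
  apply/negP => /eqP E.
  have [s [s1 s2 s3]] := Hd (tgt f) (src f) (esym E).
  exact: (forest_acyc Hfo fD s1 s2 s3).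
have Hsub : forall s : seq ('I_m * bool), all (fun e => e.1 \in D1) s -> all (fun e => e.1 \in f |: D1) s.
  move=> s Ha; apply/allP => e es; move/allP: Ha => /(_ e es) He1.
  by rewrite in_setU1 He1 orbT.
have Hcl : forall (s : seq ('I_m * bool)) x z, te x s = Some z -> all (fun e => e.1 \in D1) s ->
    forall g, g \in map fst s -> comp (src g) = comp x.
  move=> s x z Hs Ha g /mapP [e es ->].
  by have [_ ] := trail_const (P := fun g => g \in D1) Hc Hs Ha; apply.
have Hnf : forall s : seq ('I_m * bool), all (fun e => e.1 \in D1) s -> f \notin map fst s.
  by move=> s Ha; apply/negP => /mapP [e es E]; move/allP: Ha => /(_ _ es); rewrite -E (negbTE fD).
have J1 : forall x z, comp x = comp (tgt f) -> comp z = comp (src f) -> exists s,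
    [/\ te x s = Some z, uniq (map fst s) & all (fun e => e.1 \in f |: D1) s].
  move=> x z Hx Hz.
  have [s1 [a1 b1 c1]] := Hd x (tgt f) Hx.
  have [s2 [a2 b2 c2]] := Hd (src f) z (esym Hz).
  exists (s1 ++ (f, false) :: s2); split.
  - by rewrite trail_cat a1 /= eqxx.
  - rewrite map_cat /=; apply: uniq_join => //; try exact: Hnf.
    move=> g g1 g2; move: (Hcl _ _ _ a1 c1 g g1) (Hcl _ _ _ a2 c2 g g2) => E1 E2.
    by move: Hne; rewrite -E2 E1 Hx eqxx.
  - by rewrite all_cat /= Hsub // Hsub // in_setU1 eqxx.
have J2 : forall x z, comp x = comp (src f) -> comp z = comp (tgt f) -> exists s,
    [/\ te x s = Some z, uniq (map fst s) & all (fun e => e.1 \in f |: D1) s].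
  move=> x z Hx Hz.
  have [s1 [a1 b1 c1]] := Hd x (src f) Hx.
  have [s2 [a2 b2 c2]] := Hd (tgt f) z (esym Hz).
  exists (s1 ++ (f, true) :: s2); split.
  - by rewrite trail_cat a1 /= eqxx.
  - rewrite map_cat /=; apply: uniq_join => //; try exact: Hnf.
    move=> g g1 g2; move: (Hcl _ _ _ a1 c1 g g1) (Hcl _ _ _ a2 c2 g g2) => E1 E2.
    by move: Hne; rewrite -Hx -E1 E2 eqxx.
  - by rewrite all_cat /= Hsub // Hsub // in_setU1 eqxx.
pose comp' := fun x => if comp x == comp (tgt f) then comp (src f) else comp x.
have Hc' : forall g, g \in f |: D1 -> comp' (src g) = comp' (tgt g).
  move=> g; rewrite in_setU1 => /orP [/eqP -> | gD].
    by rewrite /comp' eqxx (negbTE Hne).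
  by rewrite /comp' Hc.
have Hd' : forall x z, comp' x = comp' z -> exists s,
    [/\ te x s = Some z, uniq (map fst s) & all (fun e => e.1 \in f |: D1) s].
  move=> x z; rewrite /comp'; case: eqP => Ex; case: eqP => Ez.
  - have [s [? ? ?]] := Hd x z (etrans Ex (esym Ez)); exists s; split => //; exact: Hsub.
  - by move=> H; apply: J1.
  - by move=> H; apply: J2.
  - by move=> H; have [s [? ? ?]] := Hd x z H; exists s; split => //; exact: Hsub.
pose del := y (src f) - y (tgt f) - t f.
have [Hdel|Hdel] := leP del 0.
- exists (fun x => if comp x == comp (tgt f) then y x + del else y x), comp'; split => //.
  + by move=> x; case: ifP => _; have := Hy x; lra.
  + move=> g; rewrite in_setU1 => /orP [/eqP -> | gD].
      by rewrite eqxx (negbTE Hne) /del; lra.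
    rewrite Hc //; case: ifP => _; have := Ht g gD; lra.
  + move=> x; case: (comp x =P comp (tgt f)) => Ex.
      have [r [Er Yr]] := He (src f); exists r.
      by rewrite /comp' Er Ex (negbTE Hne) eqxx.
    have [r [Er Yr]] := He x; exists r.
    by rewrite /comp' Er; move/eqP/negbTE: Ex => ->.
- exists (fun x => if comp x == comp (src f) then y x - del else y x), comp'; split => //.
  + by move=> x; case: ifP => _; have := Hy x; lra.
  + move=> g; rewrite in_setU1 => /orP [/eqP -> | gD].
      by rewrite eqxx eq_sym (negbTE Hne) /del; lra.
    rewrite Hc //; case: ifP => _; have := Ht g gD; lra.
  + move=> x; case: (comp x =P comp (src f)) => Ex.
      have [r [Er Yr]] := He (tgt f); exists r.
      rewrite /comp' Er Ex eqxx.
      by rewrite if_same eq_sym (negbTE Hne).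
    have [r [Er Yr]] := He x; exists r.
    by rewrite /comp' Er; move/eqP/negbTE: Ex => ->.
Qed.

Lemma Pclaim_all t : is_forest src tgt -> forall D0 : {set 'I_m}, Pclaim t D0.
Proof.
move=> Hfo D0; elim: {D0}#|D0| {-2}D0 (erefl #|D0|) => [|k IH] D0 HD.
  by move/eqP: HD; rewrite cards_eq0 => /eqP ->; apply: Pclaim0.
have : (0 < #|D0|)%N by rewrite HD.
case/card_gt0P => f fD.
have HD1 : #|D0 :\ f| = k by move: HD; rewrite (cardsD1 f) fD => -[].
rewrite -(finset.setD1K fD); apply: Pclaim_step => //.
  by rewrite !inE eqxx.
exact: IH.
Qed.

End Graph.


Section Main.
Variables (R : realType) (n m : nat) (src tgt : 'I_m -> 'I_n) (h : 'rV[R]_(n + m) -> R).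
Local Notation eV := (@Defs.eV R n m).
Local Notation eE := (@Defs.eE R n m).
Local Notation eT := (@Defs.eT R n m src tgt).
Local Notation eL := (@Defs.eL R n m src tgt).
Local Notation eR := (@Defs.eR R n m src tgt).
Local Notation lin := (@lin R n m).
Local Notation pts := (@cosmo_pts R n m src tgt).

Hypothesis Hfo : is_forest src tgt.
Variable c0 : 'cV[R]_(n + m).
Hypothesis Hc0le : forall p, pts p -> lin c0 p <= h p.
Hypothesis Hc0eq : @std_simplex R n m = [set p | pts p /\ lin c0 p = h p].

Definition H p := h p - lin c0 p.

Lemma entD (x y : 'rV[R]_(n + m)) j : (x + y) 0 j = x 0 j + y 0 j.
Proof. by rewrite mxE. Qed.
Lemma entN (x : 'rV[R]_(n + m)) j : (- x) 0 j = - x 0 j.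
Proof. by rewrite mxE. Qed.


Lemma eT_r f g : eT f 0 (rshift n g) = - (f == g)%:R.
Proof. by rewrite /Defs.eT !(entD, entN) !eV_r eE_r; lra. Qed.
Lemma eL_r f g : eL f 0 (rshift n g) = (f == g)%:R.
Proof. by rewrite /Defs.eL !(entD, entN) !eV_r eE_r; lra. Qed.
Lemma eR_r f g : eR f 0 (rshift n g) = (f == g)%:R.
Proof. by rewrite /Defs.eR !(entD, entN) !eV_r eE_r; lra. Qed.
Lemma eL_src f : eL f 0 (lshift m (src f)) = 1.
Proof.
rewrite /Defs.eL !(entD, entN) !eV_l eE_l eqxx eq_sym.
by rewrite (negbTE (forest_noloop Hfo f)) /=; lra.
Qed.
Lemma eR_tgt f : eR f 0 (lshift m (tgt f)) = 1.
Proof.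
rewrite /Defs.eR !(entD, entN) !eV_l eE_l eqxx.
by rewrite (negbTE (forest_noloop Hfo f)) /=; lra.
Qed.

Lemma pts_eV u : pts (eV u). Proof. by left; exists u. Qed.
Lemma pts_eE f : pts (eE f). Proof. by right; exists f; left. Qed.
Lemma pts_eT f : pts (eT f). Proof. by right; exists f; right; left. Qed.
Lemma pts_eL f : pts (eL f). Proof. by right; exists f; right; right; left. Qed.
Lemma pts_eR f : pts (eR f). Proof. by right; exists f; right; right; right. Qed.

Lemma std_eV u : @std_simplex R n m (eV u). Proof. by left; exists u. Qed.
Lemma std_eE f : @std_simplex R n m (eE f). Proof. by right; exists f. Qed.

Lemma H_eV u : H (eV u) = 0.
Proof.
have : @std_simplex R n m (eV u) by exact: std_eV.
by rewrite Hc0eq => -[_ E]; rewrite /H E subrr.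
Qed.
Lemma H_eE f : H (eE f) = 0.
Proof.
have : @std_simplex R n m (eE f) by exact: std_eE.
by rewrite Hc0eq => -[_ E]; rewrite /H E subrr.
Qed.

Lemma H_pos p : pts p -> ~ @std_simplex R n m p -> 0 < H p.
Proof.
move=> Pp Ns; rewrite /H subr_gt0 lt_neqAle Hc0le // andbT.
apply/negP => /eqP E; apply: Ns; rewrite Hc0eq; by split.
Qed.

Lemma H_eT f : 0 < H (eT f).
Proof.
apply: H_pos; first exact: pts_eT.
move=> [[u E]|[g E]]; move: (congr1 (fun x : 'rV[R]_(n + m) => x 0 (rshift n f)) E) => /=.
  by rewrite eT_r eV_r eqxx /=; lra.
by rewrite eT_r eE_r eqxx /=; case: (g == f) => /=; lra.
Qed.
Lemma H_eL f : 0 < H (eL f).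
Proof.
apply: H_pos; first exact: pts_eL.
move=> [[u E]|[g E]].
  by move: (congr1 (fun x : 'rV[R]_(n + m) => x 0 (rshift n f)) E) => /=; rewrite eL_r eV_r eqxx /=; lra.
by move: (congr1 (fun x : 'rV[R]_(n + m) => x 0 (lshift m (src f))) E) => /=; rewrite eL_src eE_l; lra.
Qed.
Lemma H_eR f : 0 < H (eR f).
Proof.
apply: H_pos; first exact: pts_eR.
move=> [[u E]|[g E]].
  by move: (congr1 (fun x : 'rV[R]_(n + m) => x 0 (rshift n f)) E) => /=; rewrite eR_r eV_r eqxx /=; lra.
by move: (congr1 (fun x : 'rV[R]_(n + m) => x 0 (lshift m (tgt f))) E) => /=; rewrite eR_tgt eE_l; lra.
Qed.


Definition valid (c : 'cV[R]_(n + m)) := forall p, pts p -> lin c p <= h p.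
Definition tight (c : 'cV[R]_(n + m)) : set 'rV[R]_(n + m) :=
  [set p | pts p /\ lin c p = h p].

Lemma lin_sh c p : lin c p = lin c0 p + lin (c - c0) p.
Proof. by rewrite lin_subc; lra. Qed.

Lemma valid_sh c p : (lin c p <= h p) = (lin (c - c0) p <= H p).
Proof. by rewrite lin_sh /H lerBrDl. Qed.
Lemma tight_sh c p : (lin c p = h p) <-> (lin (c - c0) p = H p).
Proof. by rewrite lin_sh /H; split => E; lra. Qed.

Section Valid.
Variable c : 'cV[R]_(n + m).
Hypothesis Hv : valid c.
Let d := c - c0.
Local Notation Y u := (d (lshift m u) 0).
Local Notation Z f := (d (rshift n f) 0).

Lemma Yle u : Y u <= 0.
Proof. by have := Hv (pts_eV u); rewrite valid_sh -/d H_eV lin_eV. Qed.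
Lemma Zle f : Z f <= 0.
Proof. by have := Hv (pts_eE f); rewrite valid_sh -/d H_eE lin_eE. Qed.

Lemma X1 f : lin c (eT f) = h (eT f) -> lin c (eE f) = h (eE f) -> False.
Proof.
rewrite !tight_sh -/d lin_eT lin_eE H_eE => E1 E2.
have := H_eT f; have := Yle (src f); have := Yle (tgt f); lra.
Qed.
Lemma X2 f : lin c (eL f) = h (eL f) -> lin c (eR f) = h (eR f) -> False.
Proof.
rewrite !tight_sh -/d lin_eL lin_eR => E1 E2.
have := H_eL f; have := H_eR f; have := Zle f; lra.
Qed.
Lemma X3 f : lin c (eT f) = h (eT f) -> lin c (eL f) = h (eL f) -> False.
Proof.
rewrite !tight_sh -/d lin_eT lin_eL => E1 E2.
have := H_eL f; have := H_eT f; have := Yle (src f); lra.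
Qed.
Lemma X4 f : lin c (eT f) = h (eT f) -> lin c (eR f) = h (eR f) -> False.
Proof.
rewrite !tight_sh -/d lin_eT lin_eR => E1 E2.
have := H_eR f; have := H_eT f; have := Yle (tgt f); lra.
Qed.
End Valid.

Variables (E1 D : {set 'I_m}) (left : 'I_m -> bool).
Hypothesis Hdisj : forall f, f \in E1 -> f \notin D.

Definition pf f := if left f then eL f else eR f.

Definition Good (S : set 'rV[R]_(n + m)) :=
  [/\ max_cell src tgt h S,
      (forall f, squiggly src tgt S f <-> f \in E1),
      (forall f, double_edge src tgt S f <-> f \in D)
    & (forall f, f \in D -> S (pf f))].

Lemma Good_eE c f : Good (tight c) -> f \in D -> lin c (eE f) = h (eE f).
Proof. by move=> [_ _ HD _] /HD [_ [_ [_ ->]]]. Qed.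
Lemma Good_pf c f : Good (tight c) -> f \in D -> lin c (pf f) = h (pf f).
Proof. by move=> [_ _ _ HP] /HP [_ ->]. Qed.

Lemma D_eq c1 c2 f : Good (tight c1) -> Good (tight c2) -> f \in D ->
  (c1 - c2) (lshift m (src f)) 0 = (c1 - c2) (lshift m (tgt f)) 0.
Proof.
move=> G1 G2 fD.
have e1 := Good_eE G1 fD; have e2 := Good_eE G2 fD.
have p1 := Good_pf G1 fD; have p2 := Good_pf G2 fD.
have : lin (c1 - c2) (eE f) = 0 by rewrite lin_subc e1 e2 subrr.
have : lin (c1 - c2) (pf f) = 0 by rewrite lin_subc p1 p2 subrr.
rewrite /pf lin_eE; case: (left f); rewrite ?lin_eL ?lin_eR; lra.
Qed.

Lemma node_le c1 c2 : valid c1 -> valid c2 -> Good (tight c1) -> Good (tight c2) ->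
  forall u, (c1 - c2) (lshift m u) 0 <= 0.
Proof.
move=> V1 V2 G1 G2 u0; rewrite leNgt; apply/negP => Hu0.
pose dd := c1 - c2.
pose chi := fun u => if 0 < dd (lshift m u) 0 then (1 : R) else 0.
pose kap := fun f =>
  if lin c2 (eE f) == h (eE f) then 0
  else if lin c2 (eT f) == h (eT f) then chi (src f) + chi (tgt f)
  else if lin c2 (eL f) == h (eL f) then chi (tgt f) - chi (src f)
  else if lin c2 (eR f) == h (eR f) then chi (src f) - chi (tgt f)
  else 0.
have [[_ FD2] _ HD2 _] := G2.
have := FD2 (mkc chi kap).
have HDc : forall f, lin c2 (eE f) = h (eE f) ->
    (lin c2 (eL f) = h (eL f) \/ lin c2 (eR f) = h (eR f)) -> chi (src f) = chi (tgt f).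
  move=> f Ee Elr.
  have fD : f \in D.
    apply/HD2; split; first exact: forest_noloop.
    split; last by split; [exact: pts_eE|].
    by case: Elr => E; [left|right]; (split; [first [exact: pts_eL|exact: pts_eR]|]).
  by rewrite /chi D_eq.
have Z : (mkc chi kap) = 0 -> False.
  move/(congr1 (fun x : 'cV[R]_(n + m) => x (lshift m u0) 0)).
  by rewrite mkc_l mxE /chi Hu0 /=; lra.
move=> H1; apply: Z; apply: H1 => p [Pp Tp].
case: Pp => [[u Ep]|[f [Ep|[Ep|[Ep|Ep]]]]]; subst p.
- rewrite lin_eV mkc_l /chi ifF //.
  apply/negbTE; rewrite -leNgt.
  have Hle := V1 _ (pts_eV u).
  have : lin (c1 - c2) (eV u) <= 0 by rewrite lin_subc Tp; lra.
  by rewrite lin_eV.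
- by rewrite lin_eE mkc_r /kap Tp eqxx.
- rewrite lin_eT !mkc_l mkc_r /kap ifF; last first.
    by apply/negP => /eqP E; apply: (X1 V2 Tp E).
  rewrite Tp eqxx; lra.
- rewrite lin_eL !mkc_l mkc_r /kap.
  case: eqP => Ee.
    by rewrite (HDc f Ee (or_introl Tp)); lra.
  rewrite ifF; last by apply/negP => /eqP E; apply: (X3 V2 E Tp).
  rewrite Tp eqxx; lra.
- rewrite lin_eR !mkc_l mkc_r /kap.
  case: eqP => Ee.
    by rewrite (HDc f Ee (or_intror Tp)); lra.
  rewrite ifF; last by apply/negP => /eqP E; apply: (X4 V2 E Tp).
  rewrite ifF; last by apply/negP => /eqP E; apply: (X2 V2 E Tp).
  rewrite Tp eqxx; lra.
Qed.

Lemma edge_le c1 c2 : valid c1 -> valid c2 -> Good (tight c1) -> Good (tight c2) ->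
  (forall u, (c1 - c2) (lshift m u) 0 = 0) -> forall f, (c1 - c2) (rshift n f) 0 <= 0.
Proof.
move=> V1 V2 G1 G2 Hn f.
have [[_ FD2] SQ2 _ _] := G2; have [_ SQ1 _ _] := G1.
case: (lin c2 (eT f) =P h (eT f)) => Et.
  have : f \in E1 by apply/SQ2; split; [exact: pts_eT|].
  move/SQ1 => [_ Et1].
  have : lin (c1 - c2) (eT f) = 0 by rewrite lin_subc Et Et1 subrr.
  by rewrite lin_eT !Hn; lra.
have Hone : lin c2 (eE f) = h (eE f) \/ lin c2 (eL f) = h (eL f) \/ lin c2 (eR f) = h (eR f).
  case: (lin c2 (eE f) =P h (eE f)) => a; first by left.
  case: (lin c2 (eL f) =P h (eL f)) => b; first by right; left.
  case: (lin c2 (eR f) =P h (eR f)) => c; first by right; right.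
  exfalso.
  have := FD2 (@mkc R n m (fun _ => 0) (fun g => (g == f)%:R)).
  have Z : (@mkc R n m (fun _ => 0) (fun g => (g == f)%:R)) = 0 -> False.
    move/(congr1 (fun x : 'cV[R]_(n + m) => x (rshift n f) 0)).
    by rewrite mkc_r mxE eqxx /=; lra.
  move=> H1; apply: Z; apply: H1 => p [Pp Tp].
  case: Pp => [[u Ep]|[g [Ep|[Ep|[Ep|Ep]]]]]; subst p.
  - by rewrite lin_eV mkc_l.
  - rewrite lin_eE mkc_r; case: eqP => // E; subst g; by [].
  - rewrite lin_eT !mkc_l mkc_r; case: eqP => E; [subst g; by []|]; rewrite /=; lra.
  - rewrite lin_eL !mkc_l mkc_r; case: eqP => E; [subst g; by []|]; rewrite /=; lra.
  - rewrite lin_eR !mkc_l mkc_r; case: eqP => E; [subst g; by []|]; rewrite /=; lra.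
case: Hone => [E|[E|E]].
- have := V1 _ (pts_eE f).
  have : lin (c1 - c2) (eE f) = lin c1 (eE f) - h (eE f) by rewrite lin_subc E.
  by rewrite lin_eE; lra.
- have := V1 _ (pts_eL f).
  have : lin (c1 - c2) (eL f) = lin c1 (eL f) - h (eL f) by rewrite lin_subc E.
  by rewrite lin_eL !Hn; lra.
- have := V1 _ (pts_eR f).
  have : lin (c1 - c2) (eR f) = lin c1 (eR f) - h (eR f) by rewrite lin_subc E.
  by rewrite lin_eR !Hn; lra.
Qed.

Lemma uniq_good c1 c2 : valid c1 -> valid c2 -> Good (tight c1) -> Good (tight c2) ->
  tight c1 = tight c2.
Proof.
move=> V1 V2 G1 G2.
have Hn : forall u, (c1 - c2) (lshift m u) 0 = 0.
  move=> u; have a := node_le V1 V2 G1 G2 u; have b := node_le V2 V1 G2 G1 u.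
  move: a b; rewrite !mxE; lra.
have Hn' : forall u, (c2 - c1) (lshift m u) 0 = 0.
  by move=> u; move: (Hn u); rewrite !mxE; lra.
have He : forall f, (c1 - c2) (rshift n f) 0 = 0.
  move=> f; have a := edge_le V1 V2 G1 G2 Hn f; have b := edge_le V2 V1 G2 G1 Hn' f.
  move: a b; rewrite !mxE; lra.
have E : c1 = c2 by apply/subr0_eq/cvec_eq0.
by rewrite E.
Qed.

Hypothesis Hcard : forall S, max_cell src tgt h S -> has_card S (n + m).

Definition tt f := if left f then H (eL f) else - H (eR f).

Section Exist.
Variables (y : 'I_n -> R) (comp : 'I_n -> 'I_n).
Hypothesis Hy : forall x, y x <= 0.
Hypothesis Ht : forall f, f \in D -> y (src f) - y (tgt f) = tt f.
Hypothesis Hd : forall x z, comp x = comp z -> exists s,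
  [/\ trail_end src tgt x s = Some z, uniq (map fst s) & all (fun e => e.1 \in D) s].
Hypothesis He : forall x, exists r, comp r = comp x /\ y r = 0.

Definition zz f :=
  if f \in D then 0
  else if f \in E1 then y (src f) + y (tgt f) - H (eT f)
  else let b := H (eL f) - y (src f) + y (tgt f) in
       let cc := H (eR f) + y (src f) - y (tgt f) in
       if (0 <= b) && (0 <= cc) then 0 else if b <= cc then b else cc.

Definition cp := mkc y zz.
Definition cc := c0 + cp.

Lemma cp_eV u : lin cp (eV u) = y u. Proof. by rewrite lin_eV mkc_l. Qed.
Lemma cp_eE f : lin cp (eE f) = zz f. Proof. by rewrite lin_eE mkc_r. Qed.
Lemma cp_eT f : lin cp (eT f) = y (src f) + y (tgt f) - zz f.
Proof. by rewrite lin_eT !mkc_l mkc_r. Qed.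
Lemma cp_eL f : lin cp (eL f) = y (src f) - y (tgt f) + zz f.
Proof. by rewrite lin_eL !mkc_l mkc_r. Qed.
Lemma cp_eR f : lin cp (eR f) = - y (src f) + y (tgt f) + zz f.
Proof. by rewrite lin_eR !mkc_l mkc_r. Qed.

Lemma zcases f :
  (f \in D /\ zz f = 0) \/
  (f \notin D /\ f \in E1 /\ zz f = y (src f) + y (tgt f) - H (eT f)) \/
  (f \notin D /\ f \notin E1 /\ zz f <= 0 /\
     zz f <= H (eL f) - y (src f) + y (tgt f) /\ zz f <= H (eR f) + y (src f) - y (tgt f) /\
     (zz f = 0 \/ zz f = H (eL f) - y (src f) + y (tgt f) \/ zz f = H (eR f) + y (src f) - y (tgt f))).
Proof.
rewrite /zz; case: ifP => fD; first by left.
case: ifP => fE; first by right; left.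
right; right; do 2 split => //.
case: ifP => [/andP [b0 c0']|/negbT]; first by split => //; split => //; split => //; left.
rewrite negb_and -!ltNge => Hbc.
case: ifP => Hle.
  split; first by case/orP: Hbc => ?; lra.
  do 2 (split; first lra); right; left; done.
split; first by case/orP: Hbc => ?; move/negbT: Hle; rewrite -ltNge => ?; lra.
move/negbT: Hle; rewrite -ltNge => ?.
do 2 (split; first lra); by right; right.
Qed.

Lemma cc_tight p : (lin cc p = h p) <-> (lin cp p = H p).
Proof. by rewrite /cc lin_addc /H; split => E; lra. Qed.

Lemma Vcc : valid cc.
Proof.
move=> p Pp; rewrite /cc lin_addc -lerBrDl -/(H p).
have hA := H_eT; have hB := H_eL; have hC := H_eR.
case: Pp => [[u ->]|[f [->|[->|[->|->]]]]].
- by rewrite cp_eV H_eV.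
- rewrite cp_eE H_eE.
  case: (zcases f) => [[_ ->]|[[_ [_ ->]]|[_ [_ [? _]]]]] //.
  by have := hA f; have := Hy (src f); have := Hy (tgt f); lra.
- rewrite cp_eT.
  have := hA f; have := Hy (src f); have := Hy (tgt f).
  case: (zcases f) => [[_ ->]|[[_ [_ ->]]|[_ [_ [? [? [? [->|[->|->]]]]]]]]];
    move=> *; try lra; have := hB f; have := hC f; lra.
- rewrite cp_eL.
  have := hA f; have := hB f; have := hC f; have := Hy (src f); have := Hy (tgt f).
  case: (zcases f) => [[fD ->]|[[_ [_ ->]]|[_ [_ [? [? [? _]]]]]]]; move=> *; try lra.
  have := Ht fD; rewrite /tt; case: (left f) => ?; lra.
- rewrite cp_eR.
  have := hA f; have := hB f; have := hC f; have := Hy (src f); have := Hy (tgt f).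
  case: (zcases f) => [[fD ->]|[[_ [_ ->]]|[_ [_ [? [? [? _]]]]]]]; move=> *; try lra.
  have := Ht fD; rewrite /tt; case: (left f) => ?; lra.
Qed.

Lemma zD f : f \in D -> zz f = 0.
Proof. by rewrite /zz => ->. Qed.

Lemma tight_eV r : y r = 0 -> tight cc (eV r).
Proof. by move=> E; split; [exact: pts_eV|]; apply/cc_tight; rewrite cp_eV H_eV. Qed.
Lemma tight_eE f : zz f = 0 -> tight cc (eE f).
Proof. by move=> E; split; [exact: pts_eE|]; apply/cc_tight; rewrite cp_eE H_eE. Qed.
Lemma tight_eT f : zz f = y (src f) + y (tgt f) - H (eT f) -> tight cc (eT f).
Proof. by move=> E; split; [exact: pts_eT|]; apply/cc_tight; rewrite cp_eT E; lra. Qed.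
Lemma tight_eL f : zz f = H (eL f) - y (src f) + y (tgt f) -> tight cc (eL f).
Proof. by move=> E; split; [exact: pts_eL|]; apply/cc_tight; rewrite cp_eL E; lra. Qed.
Lemma tight_eR f : zz f = H (eR f) + y (src f) - y (tgt f) -> tight cc (eR f).
Proof. by move=> E; split; [exact: pts_eR|]; apply/cc_tight; rewrite cp_eR E; lra. Qed.
Lemma tight_pf f : f \in D -> tight cc (pf f).
Proof.
move=> fD; have := Ht fD; rewrite /pf /tt; case: (left f) => E.
  by apply: tight_eL; rewrite zD //; lra.
by apply: tight_eR; rewrite zD //; lra.
Qed.

Lemma alpha0 (g : 'cV[R]_(n + m)) :
  (forall r, y r = 0 -> lin g (eV r) = 0) ->
  (forall f, f \in D -> lin g (eE f) = 0 /\ lin g (pf f) = 0) ->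
  forall u, g (lshift m u) 0 = 0.
Proof.
move=> Hr HD u.
have [r [Er Yr]] := He u.
have [s [s1 s2 s3]] := Hd (esym Er).
have Hc' : forall f, f \in D -> g (lshift m (src f)) 0 = g (lshift m (tgt f)) 0.
  move=> f fD; have [a b] := HD f fD; move: a b.
  by rewrite /pf lin_eE; case: (left f); rewrite ?lin_eL ?lin_eR; lra.
have [E _] := trail_const (phi := fun x => g (lshift m x) 0) (P := fun f => f \in D) Hc' s1 s3.
by rewrite /= in E; rewrite E -lin_eV; apply: Hr.
Qed.

Lemma FD : full_dim (tight cc).
Proof.
move=> g Hg.
have Ha : forall u, g (lshift m u) 0 = 0.
  apply: alpha0.
    by move=> r Yr; apply: Hg; apply: tight_eV.
  move=> f fD; split; apply: Hg; [apply: tight_eE; exact: zD|exact: tight_pf].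
apply: cvec_eq0 => // f.
case: (zcases f) => [[fD E]|[[_ [_ E]]|[_ [_ [_ [_ [_ [E|[E|E]]]]]]]]].
- by rewrite -lin_eE; apply: Hg; apply: tight_eE.
- have := Hg _ (tight_eT E); rewrite lin_eT !Ha; lra.
- by rewrite -lin_eE; apply: Hg; apply: tight_eE.
- have := Hg _ (tight_eL E); rewrite lin_eL !Ha; lra.
- have := Hg _ (tight_eR E); rewrite lin_eR !Ha; lra.
Qed.

Lemma MC : max_cell src tgt h (tight cc).
Proof. split; last exact: FD. by exists cc; split; [exact: Vcc|]. Qed.

Lemma no_tie f (b : bool) : f \notin D -> tight cc (eE f) ->
  tight cc (if b then eL f else eR f) -> False.
Proof.
move=> fD Te Tq.
have qr : (if b then eL f else eR f) 0 (rshift n f) = 1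
  by clear Tq; case: b; rewrite ?eL_r ?eR_r eqxx.
have qr' : forall g, g != f -> (if b then eL f else eR f) 0 (rshift n g) = 0.
  by move=> g0 gf; clear Tq qr; case: b; rewrite ?eL_r ?eR_r eq_sym (negbTE gf).
have qE : eE f != (if b then eL f else eR f).
  apply/negP => /eqP E; move: E; clear Tq qr qr'; case: b => E.
    by move: (congr1 (fun x : 'rV[R]_(n + m) => x 0 (lshift m (src f))) E) => /=; rewrite eL_src eE_l; lra.
  by move: (congr1 (fun x : 'rV[R]_(n + m) => x 0 (lshift m (tgt f))) E) => /=; rewrite eR_tgt eE_l; lra.
have qlin : forall g : 'cV[R]_(n + m), lin g (if b then eL f else eR f) =
   (if b then g (lshift m (src f)) 0 - g (lshift m (tgt f)) 0
    else - g (lshift m (src f)) 0 + g (lshift m (tgt f)) 0) + g (rshift n f) 0.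
  by move=> g; clear Tq qr qr' qE; case: b; rewrite ?lin_eL ?lin_eR.
set q := (if b then eL f else eR f) in Tq qr qr' qE qlin.
have [s [us sz Es]] := Hcard MC.
have qs : q \in s by have : [set x | x \in s] q by rewrite -Es.
have Hsz0 : (size (rem q s) < size s)%N by rewrite size_rem //; case: (s) qs.
have Hsz : (size (rem q s) < n + m)%N by move: Hsz0; rewrite sz.
have [g [gnz Hg]] := small_kernel Hsz.
have Hvan : forall x, tight cc x -> x != q -> lin g x = 0.
  move=> x Tx xq.
  have xs : x \in s by have : [set x | x \in s] x by rewrite -Es.
  have : x \in rem q s by rewrite (mem_rem_uniq _ us) !inE xq xs.
  by move/Hg => E; rewrite /lin E mxE.
have Hq : lin g q != 0.
  apply/negP => /eqP E; move/negP: gnz; apply; apply/eqP; apply: FD => x Tx.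
  by case: (x =P q) => [->|/eqP ?]; [|apply: Hvan].
have Ha : forall u, g (lshift m u) 0 = 0.
  apply: alpha0.
    move=> r Yr; apply: Hvan; first exact: tight_eV.
    apply/negP => /eqP E; move: (congr1 (fun x : 'rV[R]_(n + m) => x 0 (rshift n f)) E) => /=.
    by rewrite eV_r qr; lra.
  move=> g0 g0D; have g0f : g0 != f by apply: contraNneq fD => <-.
  split; apply: Hvan.
  - by apply: tight_eE; exact: zD.
  - apply/negP => /eqP E; move: (congr1 (fun x : 'rV[R]_(n + m) => x 0 (rshift n f)) E) => /=.
    by rewrite eE_r (negbTE g0f) qr /=; lra.
  - exact: tight_pf.
  - apply/negP => /eqP E; move: (congr1 (fun x : 'rV[R]_(n + m) => x 0 (rshift n f)) E) => /=.
    by rewrite qr /pf; case: (left g0); rewrite ?eL_r ?eR_r (negbTE g0f) /=; lra.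
have Hb : g (rshift n f) 0 = 0 by rewrite -lin_eE; apply: Hvan.
move: Hq; rewrite qlin !Ha Hb; case: (b) => /=; rewrite ?subrr ?addr0 ?oppr0 ?eqxx.
all: by [].
Qed.

Lemma good_cc : Good (tight cc).
Proof.
split; first exact: MC.
- move=> f; split.
    move=> [_ Tt]; move/cc_tight: Tt; rewrite cp_eT.
    have := H_eT f; have := H_eL f; have := H_eR f; have := Hy (src f); have := Hy (tgt f).
    case: (zcases f) => [[_ ->]|[[_ [fE _]]|[_ [_ [? [? [? [->|[->|->]]]]]]]]] //; move=> *; lra.
  move=> fE; apply: tight_eT.
  by case: (zcases f) => [[fD _]|[[_ [_ ->]]|[_ [fE' _]]]] //; [move: (Hdisj fE); rewrite fD|rewrite fE in fE'].
- move=> f; split.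
    move=> [_ [Tlr Te]]; apply/negPn/negP => fD.
    case: (zcases f) => [[fD' _]|[[_ [_ E]]|[_ [_ _]]]].
    + by rewrite fD' in fD.
    + move/cc_tight: (Te.2); rewrite cp_eE H_eE E => E'.
      have := H_eT f; have := Hy (src f); have := Hy (tgt f); lra.
    + case: Tlr => Tq; [apply: (no_tie (b := true) fD Te Tq)|apply: (no_tie (b := false) fD Te Tq)].
  move=> fD; split; first exact: forest_noloop.
  split; last by apply: tight_eE; exact: zD.
  by have := tight_pf fD; rewrite /pf; case: (left f) => ?; [left|right].
- by move=> f fD; apply: tight_pf.
Qed.

End Exist.

End Main.

Unset Implicit Arguments.

Theorem mainTheorem5 (R : realType) (n m : nat) (src tgt : 'I_m -> 'I_n)
    (h : 'rV[R]_(n + m) -> R) (E1 D : {set 'I_m}) (left : 'I_m -> bool) :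
  is_forest src tgt ->
  good_height src tgt h ->
  (forall f, f \in E1 -> f \notin D) ->
  exists! S : set 'rV[R]_(n + m),
    [/\ max_cell src tgt h S,
        (forall f, squiggly src tgt S f <-> f \in E1),
        (forall f, double_edge src tgt S f <-> f \in D)
      & (forall f, f \in D ->
           S (if left f then eL R src tgt f else eR R src tgt f))].
Proof.
move=> Hfo Hgood Hdisj.
have [Hcard _ [[c0 [Hc0le Hc0eq]] _]] := Hgood.
have [y [comp [Hy Ht _ Hd He]]] := Pclaim_all (tt src tgt h c0 left) Hfo D.
have G := @good_cc _ _ _ _ _ _ Hfo _ Hc0le Hc0eq _ _ left Hdisj Hcard _ _ Hy Ht Hd He.
have V := @Vcc _ _ _ _ _ _ Hfo _ Hc0le Hc0eq E1 D left y Hy Ht.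
exists (tight src tgt h (cc src tgt h c0 E1 D y)); split; first exact G.
move=> S' GS'.
have [[[c' [Vc' ES]] _] _ _ _] := GS'.
rewrite ES in GS' *.
exact: (uniq_good Hfo Hc0le Hc0eq V Vc' G GS').
Qed.
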